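(* The perfect-secrecy capacity of a $(\rho_r,\rho_w)$-AWTP channel satisfies $\mathsf C^0\le 1-\rho_r-\rho_w$; that is, every rate achievable by a family of perfectly secure ($\epsilon=0$) AWTP codes for the channel is at most $1-\rho_r-\rho_w$.
   Context: $\Sigma$ finite additive group, $[N]=\{1,\dots,N\}$. $(\rho_r,\rho_w)$-AWTP channel: adaptive unbounded adversary reads the sent codeword $c\in\Sigma^N$ on a set $S_r$, $|S_r|\le\rho_rN$, and adds an error vector supported in a set $S_w$, $|S_w|\le\rho_wN$, depending on its view. An $(\epsilon,\delta)$-AWTP code: randomized encoder $\mathcal M\to\Sigma^N$ and deterministic decoder $\Sigma^N\to\mathcal M$ such that adversary views for any two messages have statistical distance at most $\epsilon$ and decoding error probability is at most $\delta$ for every adversary; perfectly secure means $\epsilon=0$. Rate $\log|\mathcal M|/(N\log|\Sigma|)$. A family $\{C^N\}$ achieves rate $R$ if for every $\xi>0$ there is $N_0$ with, for all $N\ge N_0$, rate of $C^N\ge R-\xi$ and error probability $\le\xi$. $\mathsf C^0$ is the largest achievable rate over perfectly secure code families. *)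

(* Defs.v *)
From HB Require Import structures.
From mathcomp Require Import all_boot all_order all_algebra.
From Stdlib Require Import Reals.

Set Implicit Arguments.
Unset Strict Implicit.
Unset Printing Implicit Defensive.

Definition word (Sigma : finZmodType) (N : nat) := {ffun 'I_N -> Sigma}.

Definition rsum (T : finType) (f : T -> R) : R := \big[Rplus/R0]_(x : T) f x.

Definition prob (T : finType) (p : T -> R) (E : pred T) : R :=
  rsum (fun x => if E x then p x else R0).

Definition is_distr (T : finType) (p : T -> R) : Prop :=
  (forall x, Rle R0 (p x)) /\ rsum p = R1.

(* An AWTP code of length N: message set, randomized encoder (a probability
   distribution on codewords for each message), deterministic decoder. *)
Record awtp_code (Sigma : finZmodType) (N : nat) := AWTPCode {
  msg : finType;
  enc : msg -> word Sigma N -> R;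
  dec : word Sigma N -> msg
}.
Arguments msg {Sigma N} a.
Arguments enc {Sigma N} a _.
Arguments dec {Sigma N} a _.

Definition code_wf (Sigma : finZmodType) (N : nat) (C : awtp_code Sigma N) :=
  forall m, is_distr (enc C m).

(* Adaptive reading strategy: the next position to read is chosen as a
   function of everything read so far (positions and values). *)
Definition read_strategy (Sigma : finZmodType) (N : nat) :=
  seq ('I_N * Sigma) -> 'I_N.

Fixpoint run_reads (Sigma : finZmodType) (N : nat)
    (nxt : read_strategy Sigma N) (c : word Sigma N) (k : nat)
    (acc : seq ('I_N * Sigma)) : seq ('I_N * Sigma) :=
  match k with
  | 0 => acc
  | k'.+1 => let i := nxt acc in run_reads nxt c k' (rcons acc (i, c i))
  end.

Definition view (Sigma : finZmodType) (N : nat)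
    (nxt : read_strategy Sigma N) (k : nat) (c : word Sigma N) :=
  run_reads nxt c k [::].

(* A (deterministic, adaptive, unbounded) (rho_r, rho_w)-AWTP adversary:
   k adaptive reads with k <= rho_r N (so |S_r| <= rho_r N), then an error
   vector, chosen as a function of the view, whose support S_w has
   |S_w| <= rho_w N. *)
Record adversary (Sigma : finZmodType) (N : nat) := Adversary {
  nreads : nat;
  reads : read_strategy Sigma N;
  write : seq ('I_N * Sigma) -> word Sigma N
}.
Arguments nreads {Sigma N} a.
Arguments reads {Sigma N} a _.
Arguments write {Sigma N} a _.

Definition support (Sigma : finZmodType) (N : nat) (e : word Sigma N) :=
  [set i : 'I_N | e i != GRing.zero].

Definition adversary_ok (Sigma : finZmodType) (N : nat) (rho_r rho_w : R)
    (A : adversary Sigma N) : Prop :=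
  Rle (INR (nreads A)) (Rmult rho_r (INR N)) /\
  forall v, Rle (INR #|support (write A v)|) (Rmult rho_w (INR N)).

Definition view_prob (Sigma : finZmodType) (N : nat) (C : awtp_code Sigma N)
    (A : adversary Sigma N) (m : msg C) (v : seq ('I_N * Sigma)) : R :=
  prob (enc C m) (fun c => view (reads A) (nreads A) c == v).

(* Statistical distance between the view distributions for m1 and m2
   (the sum ranges over all views of positive probability under either). *)
Definition view_dist (Sigma : finZmodType) (N : nat) (C : awtp_code Sigma N)
    (A : adversary Sigma N) (m1 m2 : msg C) : R :=
  Rmult (/ 2)
    (\big[Rplus/R0]_(v <- undup [seq view (reads A) (nreads A) c | c : word Sigma N])
       Rabs (Rminus (view_prob A m1 v) (view_prob A m2 v))).

Definition received (Sigma : finZmodType) (N : nat) (A : adversary Sigma N)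
    (c : word Sigma N) : word Sigma N :=
  [ffun i => GRing.add (c i) (write A (view (reads A) (nreads A) c) i)].

Definition dec_error (Sigma : finZmodType) (N : nat) (C : awtp_code Sigma N)
    (A : adversary Sigma N) (m : msg C) : R :=
  prob (enc C m) (fun c => dec C (received A c) != m).

Definition is_awtp_code (Sigma : finZmodType) (N : nat) (rho_r rho_w eps delta : R)
    (C : awtp_code Sigma N) : Prop :=
  code_wf C /\
  forall A : adversary Sigma N, adversary_ok rho_r rho_w A ->
    (forall m1 m2 : msg C, Rle (view_dist A m1 m2) eps) /\
    (forall m : msg C, Rle (dec_error A m) delta).

Definition rate (Sigma : finZmodType) (N : nat) (C : awtp_code Sigma N) : R :=
  Rdiv (ln (INR #|msg C|)) (Rmult (INR N) (ln (INR #|Sigma|))).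

Definition achievable_perfect (Sigma : finZmodType) (rho_r rho_w Rt : R) : Prop :=
  exists Cf : forall N : nat, awtp_code Sigma N,
  exists deltaf : nat -> R,
    (forall N, is_awtp_code rho_r rho_w R0 (deltaf N) (Cf N)) /\
    forall xi : R, Rlt R0 xi ->
      exists N0 : nat, forall N : nat, (N0 <= N)%nat ->
        Rle (Rminus Rt xi) (rate (Cf N)) /\ Rle (deltaf N) xi.

(* Main.v *)
From Pilot Require Import Defs.
From HB Require Import structures.
From mathcomp Require Import all_boot all_order all_algebra.
From Stdlib Require Import Reals.
From mathcomp Require Import Rstruct zify.
From Stdlib Require Import Lra.
Set Implicit Arguments.
Unset Strict Implicit.
Unset Printing Implicit Defensive.
Import Order.TTheory GRing.Theory Num.Theory.

Local Open Scope ring_scope.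

Definition agreeR (Sigma : finZmodType) (n k : nat) (c c' : word Sigma n.+1) :=
  [forall i : 'I_n.+1, (i < k)%nat ==> (c i == c' i)].

Definition inU (Sigma : finZmodType) (n k w : nat) (u : word Sigma n.+1) :=
  [forall i : 'I_n.+1, ~~ ((k <= i) && (i < k + w))%nat ==> (u i == 0)].

Definition zW (Sigma : finZmodType) (n k w : nat) (c : word Sigma n.+1) : word Sigma n.+1 :=
  [ffun i : 'I_n.+1 => if ((k <= i) && (i < k + w))%nat then 0 else c i].

Lemma zWK (Sigma : finZmodType) (n k w : nat) (c : word Sigma n.+1) :
  zW k w (zW k w c) = zW k w c.
Proof. apply/ffunP => i; rewrite /zW !ffunE; by case: (_ && _). Qed.

Lemma zW_agree (Sigma : finZmodType) (n k w : nat) (c z : word Sigma n.+1) :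
  zW k w c = z -> agreeR k c z.
Proof.
move=> <-; apply/forallP => i; apply/implyP => hi.
rewrite ffunE; case: ifP => //; case/andP => h1 _; lia.
Qed.

Lemma inU_add (Sigma : finZmodType) (n k w : nat) (d u : word Sigma n.+1) :
  inU k w d -> inU k w (d + u) = inU k w u.
Proof.
move=> /forallP hd; apply/forallP/forallP => H i; have := H i; have := hd i;
  case: ((k <= i) && (i < k + w))%nat => //= /eqP d0; rewrite ffunE d0 ?add0r //.
Qed.

Lemma inU_zW (Sigma : finZmodType) (n k w : nat) (c : word Sigma n.+1) :
  inU k w (c - zW k w c).
Proof.
apply/forallP => i; apply/implyP => hi.
by rewrite !ffunE (negbTE hi) subrr.
Qed.

Lemma inU0 (Sigma : finZmodType) (n k w : nat) : inU k w (0 : word Sigma n.+1).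
Proof. by apply/forallP => i; rewrite ffunE eqxx implybT. Qed.

Definition Gf (Sigma : finZmodType) (n k w : nat) (C : awtp_code Sigma n.+1)
  (m : msg C) (c : word Sigma n.+1) : R :=
  \sum_(u in [pred u | inU k w u]) ((dec C (c + u) == m)%:R : R).

Lemma Gf_zW (Sigma : finZmodType) (n k w : nat) (C : awtp_code Sigma n.+1) (m : msg C) c :
  Gf k w m c = Gf k w m (zW k w c).
Proof.
rewrite /Gf; set d := c - zW k w c.
rewrite [RHS](reindex_inj (h := fun u => d + u)); last by move=> x y /addrI.
apply: eq_big => u /=; first by rewrite !inE inU_add // inU_zW.
by move=> _; rewrite addrA /d [zW _ _ _ + _]addrC subrK.
Qed.

Lemma Gf_sum (Sigma : finZmodType) (n k w : nat) (C : awtp_code Sigma n.+1) c :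
  \sum_(m : msg C) Gf k w m c = #|[pred u : word Sigma n.+1 | inU k w u]|%:R.
Proof.
rewrite /Gf exchange_big /= -sumr_const; apply: eq_bigr => u _.
rewrite (bigD1 (dec C (c + u))) //= eqxx big1 ?addr0 // => m hm.
by rewrite eq_sym (negbTE hm).
Qed.

Definition rd (Sigma : finZmodType) (n : nat) : read_strategy Sigma n.+1 :=
  fun acc => inord (size acc).

Lemma run_rd (Sigma : finZmodType) (n : nat) (c : word Sigma n.+1) j acc :
  run_reads (@rd Sigma n) c j acc =
  acc ++ [seq (inord i, c (inord i)) | i <- iota (size acc) j].
Proof.
elim: j acc => [|j IH] acc /=; first by rewrite cats0.
by rewrite IH size_rcons -cats1 -catA.
Qed.


Lemma view_rd_eq (Sigma : finZmodType) (n k : nat) (c c' : word Sigma n.+1) :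
  (k <= n.+1)%nat ->
  (view (@rd Sigma n) k c == view (@rd Sigma n) k c') = agreeR k c c'.
Proof.
move=> hk; rewrite /view !run_rd /= .
apply/eqP/forallP.
- move/eq_in_map => H i; apply/implyP => hi.
  have := H i; rewrite mem_iota add0n => /(_ hi) [].
  by rewrite inord_val => ->.
- move=> H; apply/eq_in_map => i; rewrite mem_iota add0n /= => hi.
  have hi' : (i < n.+1)%nat by apply: leq_trans hi hk.
  have := H (inord i); rewrite inordK // hi /= => /eqP ->.
  by [].
Qed.

Lemma card_fix (Sigma : finZmodType) (n k w : nat) (c : word Sigma n.+1) :
  (k + w <= n.+1)%nat ->
  (#|[pred z : word Sigma n.+1 | (zW k w z == z) && agreeR k c z]|
     <= expn #|Sigma| (n.+1 - k - w))%nat.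
Proof.
move=> hkw.
pose f (z : word Sigma n.+1) : {ffun 'I_(n.+1 - k - w) -> Sigma} :=
  [ffun j : 'I_(n.+1 - k - w) => z (inord (k + w + j))].
rewrite -(card_in_imset (f := f)); last first.
  move=> z1 z2; rewrite !inE => /andP[/eqP h1 /forallP a1] /andP[/eqP h2 /forallP a2] hf.
  apply/ffunP => i.
  have [ilt|ige] := ltnP i k.
    by move: (a1 i) (a2 i); rewrite ilt /= => /eqP <- /eqP <-.
  have [iltw|igew] := ltnP i (k + w).
    by rewrite -h1 -h2 !ffunE ige iltw.
  have hj : (i - (k + w) < n.+1 - k - w)%nat by have := ltn_ord i; lia.
  have := congr1 (fun g : {ffun _ -> _} => g (Ordinal hj)) hf; rewrite /f !ffunE /=.
  have -> : (inord (k + w + (i - (k + w))) : 'I_n.+1) = i.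
    by apply: val_inj; rewrite /= inordK; [lia | have := ltn_ord i; lia].
  by [].
apply: leq_trans (max_card _) _.
by rewrite card_ffun card_ord.
Qed.

Lemma core (Sigma : finZmodType) (n k w : nat) (C : awtp_code Sigma n.+1) (delta : R) :
  (k + w <= n.+1)%nat ->
  code_wf C ->
  (forall (m1 m2 : msg C) (c0 : word Sigma n.+1),
     \sum_(c | agreeR k c c0) enc C m1 c = \sum_(c | agreeR k c c0) enc C m2 c) ->
  (forall (m : msg C) (u : word Sigma n.+1), inU k w u ->
     1 - delta <= \sum_c enc C m c * (dec C (c + u) == m)%:R) ->
  #|msg C|%:R * (1 - delta) <= (expn #|Sigma| (n.+1 - k - w))%:R.
Proof.
move=> hkw wf hsec hdec.
case: (pickP (msg C)) => [m0 _|hM]; last first.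
  by rewrite (_ : #|msg C| = 0%nat) ?mul0r ?ler0n //; apply: eq_card0.
have p0 m c : 0 <= enc C m c by case: (wf m) => h _; apply/RleP/h.
have p1 m : \sum_c enc C m c = 1 by case: (wf m) => _ h; exact h.
set U := [pred u : word Sigma n.+1 | inU k w u].
set q := expn #|Sigma| (n.+1 - k - w).
have G0 (m : msg C) (c : word Sigma n.+1) : 0 <= Gf k w m c by apply: sumr_ge0 => u _; apply: ler0n.
pose pi m (z : word Sigma n.+1) := \sum_(c | agreeR k c z) enc C m c.
have Hstep (m : msg C) : #|U|%:R * (1 - delta) <= \sum_c enc C m c * Gf k w m c.
  rewrite /Gf; under eq_bigr do rewrite mulr_sumr.
  rewrite exchange_big /=.
  rewrite mulr_natl -sumr_const; apply: ler_sum => u hu; exact: hdec.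
have Hup (m : msg C) : \sum_c enc C m c * Gf k w m c <=
    \sum_(z | zW k w z == z) Gf k w m z * pi m z.
  rewrite (eq_bigr (fun c => enc C m c * Gf k w m (zW k w c))); last by move=> c _; rewrite -Gf_zW.
  rewrite (partition_big (zW k w) (fun z => zW k w z == z)) /=; last by move=> c _; rewrite zWK.
  apply: ler_sum => z _.
  rewrite (eq_bigr (fun c => Gf k w m z * enc C m c)); last first.
    by move=> c /eqP ->; rewrite mulrC.
  rewrite -mulr_sumr; apply: ler_wpM2l => //.
  rewrite /pi [X in _ <= X]big_mkcond [X in X <= _]big_mkcond; apply: ler_sum => c _.
  case: eqP => [/zW_agree -> //|_]; by case: ifP.
have Hsum : \sum_(z | zW k w z == z) pi m0 z <= q%:R.
  rewrite /pi (exchange_big_dep xpredT) //=.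
  apply: (@le_trans _ _ (q%:R * \sum_c enc C m0 c)); last by rewrite p1 mulr1.
  rewrite mulr_sumr; apply: ler_sum => c _.
  rewrite (_ : \sum_(z | _) _ = enc C m0 c *+ #|[pred z : word Sigma n.+1 | (zW k w z == z) && agreeR k c z]|); last first.
    exact: sumr_const.
  rewrite [X in _ <= X]mulrC -[X in X <= _]mulr_natr; apply: ler_wpM2l => //.
  rewrite /q ler_nat; exact: card_fix.
have Utot : \sum_(m : msg C) \sum_c enc C m c * Gf k w m c <= #|U|%:R * q%:R.
  apply: le_trans (ler_sum _ (fun m _ => Hup m)) _.
  rewrite exchange_big /=.
  rewrite (eq_bigr (fun z => #|U|%:R * pi m0 z)); last first.
    move=> z _; rewrite (eq_bigr (fun m => pi m0 z * Gf k w m z)); last first.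
      by move=> m _; rewrite mulrC /pi (hsec m m0).
    by rewrite -mulr_sumr Gf_sum mulrC.
  by rewrite -mulr_sumr; apply: ler_wpM2l => //; apply: ler0n.
have Upos : 0 < #|U|%:R :> R.
  by rewrite ltr0n; apply/card_gt0P; exists 0; rewrite inE inU0.
rewrite -(ler_pM2l Upos) mulrCA.
apply: le_trans Utot.
rewrite mulr_natl -sumr_const; apply: ler_sum => m _; exact: Hstep.
Qed.

Definition Aread (Sigma : finZmodType) (n k : nat) : adversary Sigma n.+1 :=
  @Adversary Sigma n.+1 k (@rd Sigma n) (fun _ => 0).

Definition Aw (Sigma : finZmodType) (n : nat) (u : word Sigma n.+1) : adversary Sigma n.+1 :=
  @Adversary Sigma n.+1 0 (@rd Sigma n) (fun _ => u).

Lemma view_prob_rd (Sigma : finZmodType) (n k : nat) (C : awtp_code Sigma n.+1)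
  (m : msg C) (c0 : word Sigma n.+1) : (k <= n.+1)%nat ->
  view_prob (Aread Sigma n k) m (view (@rd Sigma n) k c0) = \sum_(c | agreeR k c c0) enc C m c.
Proof.
move=> hk; rewrite /view_prob /prob /rsum [RHS]big_mkcond; apply: eq_bigr => c _ /=.
by rewrite view_rd_eq.
Qed.

Lemma sec_of (Sigma : finZmodType) (n k : nat) (C : awtp_code Sigma n.+1) :
  (k <= n.+1)%nat ->
  (forall m1 m2 : msg C, Rle (view_dist (Aread Sigma n k) m1 m2) R0) ->
  forall (m1 m2 : msg C) (c0 : word Sigma n.+1),
     \sum_(c | agreeR k c c0) enc C m1 c = \sum_(c | agreeR k c c0) enc C m2 c.
Proof.
move=> hk H m1 m2 c0.
rewrite -!view_prob_rd //.
set v := view (@rd Sigma n) k c0.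
have := H m1 m2; rewrite /view_dist.
set s := undup _.
have vin : v \in s by rewrite mem_undup; apply/mapP; exists c0 => //; rewrite mem_enum.
rewrite (bigD1_seq v vin (undup_uniq _)) /=.
set a := Rabs _; set b := \big[_/_]_(_ <- _ | _) _.
have b0 : Rle R0 b by apply/RleP; apply: sumr_ge0 => i _; apply/RleP; apply: Rabs_pos.
have a0 : Rle R0 a by apply: Rabs_pos.
move=> h.
have : a = R0 by apply: Rle_antisym; lra.
rewrite /a RabsE RminusE => /eqP; rewrite normr_eq0 subr_eq0 => /eqP.
done.
Qed.

Lemma dec_of (Sigma : finZmodType) (n : nat) (C : awtp_code Sigma n.+1) (delta : R)
  (m : msg C) (u : word Sigma n.+1) :
  code_wf C -> Rle (dec_error (Aw u) m) delta ->
  1 - delta <= \sum_c enc C m c * (dec C (c + u) == m)%:R.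
Proof.
move=> wf hd.
have p1 : \sum_c enc C m c = 1 by case: (wf m) => _ h; exact h.
have e : \sum_c enc C m c = dec_error (Aw u) m + \sum_c enc C m c * (dec C (c + u) == m)%:R.
  rewrite /dec_error /prob /rsum -big_split; apply: eq_bigr => c _ /=.
  have -> : received (Aw u) c = c + u by apply/ffunP => i; rewrite !ffunE.
  by case: eqP => _ /=; rewrite ?mulr1 ?mulr0 ?addr0 ?add0r.
rewrite p1 in e; rewrite [X in X - delta <= _]e addrAC -[X in _ <= X]add0r lerD2r subr_le0.
exact/RleP.
Qed.

Lemma support_inU (Sigma : finZmodType) (n k w : nat) (u : word Sigma n.+1) :
  inU k w u -> (#|Pilot.Defs.support u| <= w)%nat.
Proof.
move=> /forallP hu.
pose g (j : 'I_w) : 'I_n.+1 := inord (k + j).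
apply: leq_trans (_ : #|[set g j | j in 'I_w]| <= w)%nat.
  apply: subset_leq_card; apply/subsetP => i; rewrite inE => ui.
  have := hu i; case: (boolP ((k <= i) && (i < k + w))%nat) => [/andP[h1 h2] _|_ /= /eqP u0];
    last by rewrite u0 eqxx in ui.
  have hj : (i - k < w)%nat by lia.
  apply/imsetP; exists (Ordinal hj) => //.
  by apply: val_inj; rewrite /g /= inordK; have := ltn_ord i; lia.
by apply: leq_trans (leq_imset_card _ _) _; rewrite card_ord.
Qed.

Lemma bound_of (Sigma : finZmodType) (n k w : nat) (C : awtp_code Sigma n.+1)
  (delta rho_r rho_w : R) :
  (k + w <= n.+1)%nat -> Rle R0 rho_r -> Rle R0 rho_w ->
  Rle (INR k) (Rmult rho_r (INR n.+1)) -> Rle (INR w) (Rmult rho_w (INR n.+1)) ->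
  is_awtp_code rho_r rho_w R0 delta C ->
  #|msg C|%:R * (1 - delta) <= (expn #|Sigma| (n.+1 - k - w))%:R.
Proof.
move=> hkw hr hw hk hwr [wf H].
have pN : Rle R0 (INR n.+1) by apply: pos_INR.
apply: core => //.
- apply: sec_of; first by lia.
  move=> m1 m2; case: (H (Aread Sigma n k)) => [|h _]; last exact: h.
  split; first exact: hk.
  move=> v; rewrite (_ : Pilot.Defs.support _ = set0); first by rewrite cards0; apply: Rmult_le_pos.
  by apply/setP => i; rewrite !inE ffunE eqxx.
- move=> m u hu; apply: dec_of => //.
  case: (H (Aw u)) => [|_ h]; last exact: h.
  split; first by apply: Rmult_le_pos.
  move=> v; apply: Rle_trans hwr; rewrite /=.
  apply: le_INR; apply/ssrnat.leP; exact: support_inU hu.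
Qed.

Local Close Scope ring_scope.

Lemma ln0 : ln (INR 0) = 0%R.
Proof. unfold ln; simpl. case: (Rlt_dec 0 0) => h; [by case: (Rlt_irrefl _ h) | reflexivity]. Qed.

Lemma ln_le' (x y : R) : Rlt R0 x -> Rle x y -> Rle (ln x) (ln y).
Proof.
move=> hx hxy; case: (Rle_lt_or_eq_dec _ _ hxy) => h.
- by apply: Rlt_le; apply: ln_increasing.
- by rewrite h; apply: Rle_refl.
Qed.

Lemma INR_expn (m t : nat) : INR (expn m t) = pow (INR m) t.
Proof.
elim: t => [|t IH]; first by rewrite expn0.
by rewrite expnS mult_INR IH /=.
Qed.

Lemma floor_nat (x : R) : Rle R0 x -> exists k : nat, Rle (INR k) x /\ Rlt x (INR k + 1).
Proof.
move=> hx; case: (archimed x) => h1 h2.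
have hz : (1 <= up x)%Z.
  have : (0 < up x)%Z by apply: lt_IZR; lra.
  lia.
exists (Z.to_nat (up x - 1)); rewrite INR_IZR_INZ Znat.Z2Nat.id; last by lia.
rewrite minus_IZR; simpl; lra.
Qed.

Lemma INR_addn (a b : nat) : INR (addn a b) = Rplus (INR a) (INR b).
Proof. exact: plus_INR. Qed.

Theorem mainTheorem4 (Sigma : finZmodType) (rho_r rho_w : R) :
  (1 < #|Sigma|)%nat ->
  Rle R0 rho_r -> Rle R0 rho_w -> Rle (Rplus rho_r rho_w) R1 ->
  forall Rt : R, achievable_perfect Sigma rho_r rho_w Rt ->
    Rle Rt (Rminus (Rminus R1 rho_r) rho_w).
Proof.
move=> hq hr hw hrw Rt [Cf [df [Hc Hlim]]].
set B := Rminus (Rminus R1 rho_r) rho_w.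
case: (Rle_lt_dec Rt B) => // hgt; exfalso.
set g := Rminus Rt B.
have hg : Rlt 0%R g by rewrite /g; lra.
have q2 : Rle 2 (INR #|Sigma|).
  have : Rle (INR 2) (INR #|Sigma|) by apply: le_INR; apply/ssrnat.leP.
  by rewrite /=; lra.
set L := ln (INR #|Sigma|).
have lq : Rlt 0%R L by rewrite /L -ln_1; apply: ln_increasing; lra.
have l2 : Rlt 0%R (ln 2) by rewrite -ln_1; apply: ln_increasing; lra.
set X := Rdiv (4 * (ln 2 + 2 * L)) (g * L).
have gL : Rlt 0%R (g * L) by apply: Rmult_lt_0_compat.
have X0 : Rle 0%R X.
  rewrite /X /Rdiv; apply: Rmult_le_pos; first lra.
  by apply: Rlt_le; apply: Rinv_0_lt_compat.
case: (floor_nat X0) => M [_ hM].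
set xi := Rmin (g / 4) (1 / 2).
have hxi : Rlt 0%R xi by apply: Rmin_pos; lra.
have xi1 : Rle xi (g / 4) by apply: Rmin_l.
have xi2 : Rle xi (1 / 2) by apply: Rmin_r.
case: (Hlim xi hxi) => N0 HN.
set n := maxn N0 M.
have [hrate hd] := HN n.+1 (leq_trans (leq_maxl N0 M) (leqnSn _)).
have hNX : Rlt X (INR n.+1).
  have : Rle (INR M.+1) (INR n.+1) by apply: le_INR; apply/ssrnat.leP; rewrite ltnS leq_maxr.
  rewrite S_INR; lra.
have pN : Rle 0%R (INR n.+1) by apply: pos_INR.
case: (floor_nat (Rmult_le_pos _ _ hr pN)) => k [hk1 hk2].
case: (floor_nat (Rmult_le_pos _ _ hw pN)) => w [hw1 hw2].
have hkw : (k + w <= n.+1)%nat.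
  apply/ssrnat.leP; apply: INR_le; rewrite INR_addn; nra.
have hb' : Rle (INR #|msg (Cf n.+1)| * (1 - df n.+1)) (INR (expn #|Sigma| (n.+1 - k - w))).
  apply/RleP; rewrite !INRE; exact: (bound_of hkw hr hw hk1 hw1 (Hc n.+1)).
set t := (n.+1 - k - w)%nat.
have et : (t + k + w = n.+1)%nat by rewrite /t; lia.
have ht : INR n.+1 = (INR t + INR k + INR w)%R by rewrite -et !INR_addn.
have hlog : Rle (ln (INR #|msg (Cf n.+1)|)) (ln 2 + INR t * L).
  case: (posnP #|msg (Cf n.+1)|) => [->|hpos].
    rewrite ln0; have := pos_INR t; nra.
  have mpos : Rlt 0%R (INR #|msg (Cf n.+1)|) by apply: lt_0_INR; apply/ssrnat.ltP.
  rewrite /L -ln_pow; last lra.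
  rewrite -ln_mult; [|lra|apply: pow_lt; lra].
  apply: ln_le' => //.
  rewrite -INR_expn; change (n.+1 - k - w)%nat with t in hb'; nra.
have D0 : Rlt 0%R (INR n.+1 * L).
  apply: Rmult_lt_0_compat => //; apply: lt_0_INR; lia.
have F1 : Rle ((Rt - xi) * (INR n.+1 * L)) (ln 2 + INR t * L).
  apply: Rle_trans hlog.
  have : Rle ((Rt - xi) * (INR n.+1 * L)) (rate (Cf n.+1) * (INR n.+1 * L)).
    by apply: Rmult_le_compat_r => //; apply: Rlt_le.
  rewrite /rate; have -> : (Rdiv (ln (INR #|msg (Cf n.+1)|)) (INR n.+1 * ln (INR #|Sigma|)) * (INR n.+1 * L))%R
     = ln (INR #|msg (Cf n.+1)|).
    rewrite /L; field; split; apply: Rgt_not_eq => //; apply: lt_0_INR; lia.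
  by [].
have F2 : Rle (INR t * L) ((INR n.+1 * B + 2) * L).
  apply: Rmult_le_compat_r; first lra.
  rewrite /B; nra.
have F3 : (X * (g * L) = 4 * (ln 2 + 2 * L))%R.
  by rewrite /X; field; split; apply: Rgt_not_eq.
have F4 : Rlt (X * (g * L)) (INR n.+1 * (g * L)) by apply: Rmult_lt_compat_r.
have F5 : Rle ((3 * g / 4) * (INR n.+1 * L)) ((Rt - xi - B) * (INR n.+1 * L)).
  apply: Rmult_le_compat_r; [lra | rewrite /g in xi1 *; lra].
nra.
Qed.
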